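(* Let $m\ge1$ and let $\phi\in C^\infty(\mathbb R^2)$ satisfy, for some $C>0$ and all $z\in\mathbb R^2$, $|D^3\phi(z)|\le C|z|^{2m-1}$, $|D^2\phi(z)|\le C|z|^{2m}$, $|D\phi(z)|\le C|z|^{2m+1}$. Then there is a constant $C'>0$ such that for all $z,\zeta\in\mathbb R^2$, $$\Big|\phi(\zeta)-\phi(z)+\mu_{\zeta,z}^{2m}\,\omega(z,\zeta)-\langle ZF(z),\zeta-z\rangle\Big|\le C'\mu_{\zeta,z}^{2m}|\zeta-z|^2,$$ where $\mu_{\zeta,z}=\max\{|z|,|\zeta|\}$.
   Context: For $z=(x,y)$, $\zeta=(\xi,\eta)\in\mathbb R^2$, $\omega(z,\zeta)=x\eta-y\xi$. For $\phi\in C^\infty(\mathbb R^2)$ let $F(z,t)=\phi(z)-t$, $XF(z)=\phi_x(z)-|z|^{2m}y$, $YF(z)=\phi_y(z)+|z|^{2m}x$ (the derivatives of $F$ along $X=\partial_x+|z|^{2m}y\partial_t$, $Y=\partial_y-|z|^{2m}x\partial_t$), and $ZF(z)=(XF(z),YF(z))\in\mathbb R^2$. $|D^k\phi(z)|$ is the maximum of the absolute values of all $k$-th order partial derivatives of $\phi$ at $z$. *)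

(* Defs.v *)
From Stdlib Require Import Reals.
Open Scope R_scope.

Definition norm2 (x y : R) : R := sqrt (x ^ 2 + y ^ 2).

Definition omega (x y xi eta : R) : R := x * eta - y * xi.

Definition continuous2 (f : R -> R -> R) : Prop :=
  forall x y eps, 0 < eps -> exists delta, 0 < delta /\
    forall x' y', norm2 (x' - x) (y' - y) < delta -> Rabs (f x' y' - f x y) < eps.

(* D is the family of all partial derivatives of phi:
   D i j = d_x^i d_y^j phi, each continuous; such a family exists iff phi is
   C^infinity on R^2, and it is then unique. *)
Definition smooth_family (phi : R -> R -> R) (D : nat -> nat -> R -> R -> R) : Prop :=
  D 0%nat 0%nat = phi /\
  forall i j,
    continuous2 (D i j) /\
    (forall x y, derivable_pt_lim (fun t => D i j t y) x (D (S i) j x y)) /\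
    (forall x y, derivable_pt_lim (fun t => D i j x t) y (D i (S j) x y)).

Definition Dk_bounded (D : nat -> nat -> R -> R -> R) (k : nat) (x y b : R) : Prop :=
  forall i j, (i + j)%nat = k -> Rabs (D i j x y) <= b.

(* ZF(z) = (phi_x - |z|^{2m} y, phi_y + |z|^{2m} x) *)
Definition XF (D : nat -> nat -> R -> R -> R) (m : nat) (x y : R) : R :=
  D 1%nat 0%nat x y - norm2 x y ^ (2 * m) * y.
Definition YF (D : nat -> nat -> R -> R -> R) (m : nat) (x y : R) : R :=
  D 0%nat 1%nat x y + norm2 x y ^ (2 * m) * x.

(* Main.v *)
Require Import Defs.
From Stdlib Require Import Reals.
From Stdlib Require Import Lra Lia Psatz.
Open Scope R_scope.

Definition betw (a b c : R) := (a <= c <= b) \/ (b <= c <= a).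

Lemma mvt_gen (f f' : R -> R) (a b : R) :
  (forall t, derivable_pt_lim f t (f' t)) ->
  exists c, betw a b c /\ f b - f a = f' c * (b - a).
Proof.
  intros Hd. destruct (Rtotal_order a b) as [H|[H|H]].
  - destruct (MVT_cor2 f f' a b H (fun c _ => Hd c)) as [c [E Hc]].
    exists c; split; [left; lra | exact E].
  - subst; exists b; split; [left; lra | ring].
  - destruct (MVT_cor2 f f' b a H (fun c _ => Hd c)) as [c [E Hc]].
    exists c; split; [right; lra | lra].
Qed.

Lemma betw_abs a b c : betw a b c -> Rabs (c - a) <= Rabs (b - a).
Proof. unfold betw; intros [H|H]; unfold Rabs; repeat match goal with |- context [Rcase_abs ?e] => destruct (Rcase_abs e) end; lra. Qed.

Lemma betw_sq a b c : betw a b c -> c^2 <= a^2 + b^2.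
Proof. unfold betw; intros [H|H]; destruct (Rle_dec 0 c); nra. Qed.

Lemma betw_trans a b c d : betw a b c -> betw a c d -> betw a b d.
Proof. unfold betw; lra. Qed.

Lemma betw_l a b : betw a b a.
Proof. unfold betw; lra. Qed.

Lemma betw_r a b : betw a b b.
Proof. unfold betw; destruct (Rle_dec a b); lra. Qed.

Lemma pow_sqrt2m s n : 0 <= s -> sqrt s ^ (2 * n) = s ^ n.
Proof. intros; rewrite pow_mult, pow2_sqrt; auto. Qed.

Lemma norm_bound p q M n : 0 <= M -> p^2 + q^2 <= 2 * M ->
  norm2 p q ^ (2 * n) <= 2 ^ n * M ^ n.
Proof.
  intros HM H. unfold norm2. rewrite pow_sqrt2m by nra.
  rewrite <- Rpow_mult_distr. apply pow_incr. nra.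
Qed.

Lemma pow_diff n R M : 0 <= R <= M ->
  M ^ S n - R ^ S n <= INR (S n) * M ^ n * (M - R).
Proof.
  intros H. induction n.
  - simpl; lra.
  - assert (HRn : R ^ S n <= M ^ S n) by (apply pow_incr; lra).
    assert (0 <= R ^ S n) by (apply pow_le; lra).
    assert (0 <= M ^ n) by (apply pow_le; lra).
    rewrite S_INR.
    replace (M ^ S (S n) - R ^ S (S n)) with (M * (M ^ S n - R ^ S n) + R ^ S n * (M - R)) by (simpl; ring).
    replace (M ^ S n) with (M * M ^ n) in * by (simpl; ring).
    nra.
Qed.

Lemma abs_le_sq a b : 0 <= b -> a^2 <= b^2 -> Rabs a <= b.
Proof. intros; unfold Rabs; destruct (Rcase_abs a); nra. Qed.

Lemma omega_bound x y xi eta M :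
  x^2 + y^2 <= M -> xi^2 + eta^2 <= M -> (M = x^2 + y^2 \/ M = xi^2 + eta^2) ->
  Rabs ((M - (x^2+y^2)) * (x * (eta - y) - y * (xi - x)))
    <= 2 * M * ((xi - x)^2 + (eta - y)^2).
Proof.
  intros H1 H2 [E|E].
  - rewrite E. replace (x^2+y^2 - (x^2+y^2)) with 0 by ring.
    rewrite Rmult_0_l, Rabs_R0. apply Rmult_le_pos; [apply Rmult_le_pos|]; try lra; rewrite <- !Rsqr_pow2; (apply Rplus_le_le_0_compat; apply Rle_0_sqr).
  - assert (0 <= M) by nra. assert (0 <= (xi - x)^2 + (eta - y)^2) by (generalize (pow2_ge_0 (xi-x)) (pow2_ge_0 (eta-y)); lra).
    apply abs_le_sq. nra.
    set (N := (xi - x)^2 + (eta - y)^2).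
    assert (HN : 0 <= N) by (unfold N; lra).
    assert (A : (M - (x^2+y^2))^2 <= N * ((xi+x)^2 + (eta+y)^2)).
    { rewrite E; unfold N.
      generalize (pow2_ge_0 ((xi-x)*(eta+y) - (eta-y)*(xi+x))).
      assert (((xi^2+eta^2) - (x^2+y^2))^2 + ((xi-x)*(eta+y) - (eta-y)*(xi+x))^2
        = ((xi - x)^2 + (eta - y)^2) * ((xi+x)^2 + (eta+y)^2)) by ring. lra. }
    assert (B : (x * (eta - y) - y * (xi - x))^2 <= (x^2+y^2) * N).
    { unfold N. generalize (pow2_ge_0 (x*(xi-x) + y*(eta-y))).
      assert ((x * (eta - y) - y * (xi - x))^2 + (x*(xi-x) + y*(eta-y))^2
        = (x^2+y^2) * ((xi - x)^2 + (eta - y)^2)) by ring. lra. }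
    assert (Cc : (xi+x)^2 + (eta+y)^2 <= 4 * M).
    { generalize (pow2_ge_0 (xi-x)) (pow2_ge_0 (eta-y)).
      assert ((xi+x)^2 + (eta+y)^2 + ((xi-x)^2 + (eta-y)^2) = 2*(xi^2+eta^2) + 2*(x^2+y^2)) by ring.
      lra. }
    assert (A2 : (M - (x^2+y^2))^2 <= 4 * M * N) by nra.
    assert (B2 : (x * (eta - y) - y * (xi - x))^2 <= M * N) by nra.
    generalize (pow2_ge_0 (M - (x^2+y^2))) (pow2_ge_0 (x * (eta - y) - y * (xi - x))); intros.
    replace (((M - (x ^ 2 + y ^ 2)) * (x * (eta - y) - y * (xi - x))) ^ 2) with
      ((M - (x^2+y^2))^2 * (x * (eta - y) - y * (xi - x))^2) by ring.
    replace ((2 * M * N) ^ 2) with ((4 * M * N) * (M * N)) by ring.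
    apply Rmult_le_compat; auto.
Qed.

Lemma term_bound a u v w K : Rabs a <= K -> Rabs u <= Rabs v ->
  Rabs (a * u * w) <= K * Rabs v * Rabs w.
Proof.
  intros H1 H2. rewrite !Rabs_mult.
  apply Rmult_le_compat_r; [apply Rabs_pos|].
  apply Rmult_le_compat; auto; apply Rabs_pos.
Qed.

Theorem proposition3p3 :
  forall (m : nat) (phi : R -> R -> R) (D : nat -> nat -> R -> R -> R) (C : R),
    (1 <= m)%nat ->
    smooth_family phi D ->
    0 < C ->
    (forall x y,
        Dk_bounded D 3 x y (C * norm2 x y ^ (2 * m - 1)) /\
        Dk_bounded D 2 x y (C * norm2 x y ^ (2 * m)) /\
        Dk_bounded D 1 x y (C * norm2 x y ^ (2 * m + 1))) ->
    exists C', 0 < C' /\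
      forall x y xi eta,
        let mu := Rmax (norm2 x y) (norm2 xi eta) in
        Rabs (phi xi eta - phi x y + mu ^ (2 * m) * omega x y xi eta
              - (XF D m x y * (xi - x) + YF D m x y * (eta - y)))
        <= C' * mu ^ (2 * m) * norm2 (xi - x) (eta - y) ^ 2.
Proof.
  intros m phi D C Hm [H0 Hs] HC Hb.
  assert (H2m : 0 < 2 ^ m) by (apply pow_lt; lra).
  assert (Hmr : 0 <= INR m) by apply pos_INR.
  exists (2 * C * 2 ^ m + 2 * INR m). split.
  { assert (0 < C * 2 ^ m) by (apply Rmult_lt_0_compat; lra). lra. }
  intros x y xi eta mu.
  set (R0 := x^2 + y^2). set (S0 := xi^2 + eta^2).
  assert (HR0 : 0 <= R0) by (unfold R0; generalize (pow2_ge_0 x) (pow2_ge_0 y); lra).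
  assert (HS0 : 0 <= S0) by (unfold S0; generalize (pow2_ge_0 xi) (pow2_ge_0 eta); lra).
  assert (HM : R0 <= mu^2 /\ S0 <= mu^2 /\ (mu^2 = R0 \/ mu^2 = S0)).
  { unfold mu, norm2. fold R0 S0.
    generalize (sqrt_pos R0) (sqrt_pos S0) (pow2_sqrt R0 HR0) (pow2_sqrt S0 HS0).
    unfold Rmax; destruct (Rle_dec (sqrt R0) (sqrt S0)); intros; nra. }
  destruct HM as [HRM [HSM HME]].
  rewrite pow_mult.
  set (M := mu ^ 2) in *.
  assert (HM0 : 0 <= M) by lra.
  assert (HN : norm2 (xi - x) (eta - y) ^ 2 = (xi - x)^2 + (eta - y)^2).
  { unfold norm2. apply pow2_sqrt. generalize (pow2_ge_0 (xi-x)) (pow2_ge_0 (eta-y)); lra. }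
  rewrite HN.
  set (N := (xi - x)^2 + (eta - y)^2) in *.
  assert (HN0 : 0 <= N) by (unfold N; generalize (pow2_ge_0 (xi-x)) (pow2_ge_0 (eta-y)); lra).
  unfold XF, YF, omega.
  replace (norm2 x y ^ (2 * m)) with (R0 ^ m) by (unfold norm2; rewrite pow_sqrt2m; auto).
  rewrite <- H0.
  assert (DX : forall i j x0 y0, derivable_pt_lim (fun t => D i j t y0) x0 (D (S i) j x0 y0))
    by (intros; apply (Hs i j)).
  assert (DY : forall i j x0 y0, derivable_pt_lim (fun t => D i j x0 t) y0 (D i (S j) x0 y0))
    by (intros; apply (Hs i j)).
  destruct (mvt_gen _ _ x xi (fun t => DX 0%nat 0%nat t y)) as [c [Bc E1]].
  destruct (mvt_gen _ _ x c (fun t => DX 1%nat 0%nat t y)) as [c2 [Bc2 E2]].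
  destruct (mvt_gen _ _ y eta (fun t => DY 0%nat 0%nat xi t)) as [d [Bd E3]].
  destruct (mvt_gen _ _ y d (fun t => DY 0%nat 1%nat xi t)) as [d2 [Bd2 E4]].
  destruct (mvt_gen _ _ x xi (fun t => DX 0%nat 1%nat t y)) as [c3 [Bc3 E5]].
  simpl in E1, E2, E3, E4, E5.
  set (K := C * (2 ^ m * M ^ m)).
  assert (Hsq : forall p q, betw x xi p -> betw y eta q -> p^2 + q^2 <= 2 * M).
  { intros p q Hp Hq. apply betw_sq in Hp. apply betw_sq in Hq.
    unfold R0, S0 in *. lra. }
  assert (HD2 : forall i j p q, (i + j = 2)%nat -> betw x xi p -> betw y eta q ->
             Rabs (D i j p q) <= K).
  { intros i j p q Hij Hp Hq. destruct (Hb p q) as [_ [Hb2 _]].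
    apply Rle_trans with (1 := Hb2 i j Hij). unfold K.
    apply Rmult_le_compat_l; [lra|]. apply norm_bound; auto. }
  assert (Bc2' := betw_trans x xi c c2 Bc Bc2).
  assert (Bd2' := betw_trans y eta d d2 Bd Bd2).
  assert (A1 : Rabs (D 2%nat 0%nat c2 y * (c - x) * (xi - x)) <= K * Rabs (xi - x) * Rabs (xi - x)).
  { apply term_bound. apply HD2; auto; apply betw_l. apply betw_abs; auto. }
  assert (A2 : Rabs (D 0%nat 2%nat xi d2 * (d - y) * (eta - y)) <= K * Rabs (eta - y) * Rabs (eta - y)).
  { apply term_bound. apply HD2; auto. apply betw_r. apply betw_abs; auto. }
  assert (A3 : Rabs (D 1%nat 1%nat c3 y * (xi - x) * (eta - y)) <= K * Rabs (xi - x) * Rabs (eta - y)).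
  { apply term_bound. apply HD2; auto; apply betw_l. lra. }
  assert (HW : Rabs ((M ^ m - R0 ^ m) * (x * (eta - y) - y * (xi - x))) <= 2 * INR m * M ^ m * N).
  { destruct m as [|k]; [lia|].
    assert (P1 : R0 ^ S k <= M ^ S k) by (apply pow_incr; lra).
    assert (P2 := pow_diff k R0 M (conj HR0 HRM)).
    assert (P3 := omega_bound x y xi eta M HRM HSM HME). fold R0 N in P3.
    assert (0 <= M ^ k) by (apply pow_le; lra).
    rewrite Rabs_mult, (Rabs_right (M ^ S k - R0 ^ S k)) by lra.
    rewrite Rabs_mult in P3. rewrite (Rabs_right (M - R0)) in P3 by lra.
    assert (0 <= Rabs (x * (eta - y) - y * (xi - x))) by apply Rabs_pos.
    apply Rle_trans with (INR (S k) * M ^ k * ((M - R0) * Rabs (x * (eta - y) - y * (xi - x)))).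
    { rewrite <- Rmult_assoc. apply Rmult_le_compat_r; auto. }
    replace (M ^ S k) with (M * M ^ k) by (simpl; ring).
    apply Rle_trans with (INR (S k) * M ^ k * (2 * M * N)).
    { apply Rmult_le_compat_l; auto. apply Rmult_le_pos; auto. }
    lra. }
  match goal with |- Rabs ?e <= _ =>
    replace e with (D 2%nat 0%nat c2 y * (c - x) * (xi - x) + D 0%nat 2%nat xi d2 * (d - y) * (eta - y)
      + D 1%nat 1%nat c3 y * (xi - x) * (eta - y) + (M ^ m - R0 ^ m) * (x * (eta - y) - y * (xi - x)))
  end.
  2:{ replace (D 0%nat 0%nat xi eta) with (D 0%nat 0%nat xi y + D 0%nat 1%nat xi d * (eta - y)) by lra.
    replace (D 0%nat 0%nat xi y) with (D 0%nat 0%nat x y + D 1%nat 0%nat c y * (xi - x)) by lra.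
    replace (D 0%nat 1%nat xi d) with (D 0%nat 1%nat xi y + D 0%nat 2%nat xi d2 * (d - y)) by lra.
    replace (D 0%nat 1%nat xi y) with (D 0%nat 1%nat x y + D 1%nat 1%nat c3 y * (xi - x)) by lra.
    replace (D 1%nat 0%nat c y) with (D 1%nat 0%nat x y + D 2%nat 0%nat c2 y * (c - x)) by lra.
    ring. }
  eapply Rle_trans; [apply Rabs_triang|].
  eapply Rle_trans; [apply Rplus_le_compat_r; apply Rabs_triang|].
  eapply Rle_trans; [apply Rplus_le_compat_r; apply Rplus_le_compat_r; apply Rabs_triang|].
  assert (Q : Rabs (xi - x) * Rabs (xi - x) + Rabs (eta - y) * Rabs (eta - y)
              + Rabs (xi - x) * Rabs (eta - y) <= 2 * N).
  { generalize (pow2_abs (xi - x)) (pow2_abs (eta - y)); intros Q1 Q2.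
    generalize (pow2_ge_0 (Rabs (xi - x) - Rabs (eta - y))). unfold N. intros. nra. }
  assert (HK : K = C * 2 ^ m * M ^ m) by (unfold K; ring).
  assert (0 <= K) by (unfold K; apply Rmult_le_pos; [lra|]; apply Rmult_le_pos; [lra|apply pow_le; lra]).
  assert (K * (Rabs (xi - x) * Rabs (xi - x) + Rabs (eta - y) * Rabs (eta - y)
              + Rabs (xi - x) * Rabs (eta - y)) <= K * (2 * N)) by (apply Rmult_le_compat_l; auto).
  rewrite HK in *.
  nra.
Qed.
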